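(* Consider the Double TFM with all transactions of common size $s>0$, history $H$ with burning fee $r$, and a set $M_0$ of user transactions with $|M_0|=w>c_{block}$ (congestion). Suppose all includers and the block producer follow the indicated allocation rules and add no fake transactions, and let $B_k$ be the resulting block. Then for every transaction $t\in M_0\setminus B_k$ there exists a bid $b_t$ for $t$ such that, when $b_t$ replaces the original bid of $t$ and all other transactions and bids are unchanged, and all includers and the block producer follow the indicated allocation rules without fake transactions, $t$ is included in at least one inclusion list and in the block.
   Context: Model: in one slot there are users, $m$ includers with distinct orders $1,\dots,m$ (order $1$ is best), and one block producer. Each transaction has size $s$. An includer chooses an inclusion list (at most $c_{Incl}$ transactions) and the block producer, seeing the lists, builds a block (at most $c_{block}$ transactions). Every transaction in the block pays burning fee $r s$. The block producer incurs cost $\mu^{Cost}_{BP}\ge0$ per unit of size per user transaction in its block; each includer incurs cost $\mu^{Cost}_{CM}\ge0$ per unit of size per user transaction in its list. Double TFM: a bid is $b_t=(\delta^{CM}_t,\delta^{BP}_t,c_t)$ with all entries nonnegative reals. The block producer fee of $t$ is $\max\{\min\{\delta^{BP}_t s,\ c_t s-rs\},0\}$ (paid to the block producer when $t$ is in the block); the committee fee is $\max\{\min\{\delta^{CM}_t s,\ c_t s-rs-\min\{\delta^{BP}_t s, c_t s-rs\}\},0\}$ (paid to the smallest-order includer that listed $t$, only if $t$ is in the block). Indicated allocation rules. Block producer: among transactions with $c_t\ge r+\mu^{Cost}_{BP}$ and $\delta^{BP}_t\ge \mu^{Cost}_{BP}$, include those with the highest block producer fee (deterministic tie-breaking) until the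 block is full or none remain. Includer of order $j$: compute the set $S$ of transactions the block producer following its rule would include; discard from $S$ those with committee fee below $\mu^{Cost}_{CM} s$; sort the rest by committee fee decreasingly (deterministic tie-breaking); includer $j$ includes the transactions in positions $(j-1)c_{Incl}+1,\dots,jc_{Incl}$ of this sorted list (if present). *)

(* Defs.v *)
From HB Require Import structures.
From mathcomp Require Import all_boot all_order all_algebra.
From mathcomp Require Import reals.
Set Implicit Arguments. Unset Strict Implicit. Unset Printing Implicit Defensive.
Import Order.TTheory GRing.Theory Num.Theory.
Local Open Scope ring_scope.

Record bid (R : realType) := Bid { dCM : R; dBP : R; cap : R }.

Definition valid_bid (R : realType) (b : bid R) : Prop :=
  0 <= dCM b /\ 0 <= dBP b /\ 0 <= cap b.

Definition bp_fee (R : realType) (r s : R) (b : bid R) : R :=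
  Num.max (Num.min (dBP b * s) (cap b * s - r * s)) 0.

Definition cm_fee (R : realType) (r s : R) (b : bid R) : R :=
  Num.max (Num.min (dCM b * s)
                   (cap b * s - r * s - Num.min (dBP b * s) (cap b * s - r * s))) 0.

Definition before (R : realType) (T : finType) (f : T -> R) (tb : T -> nat) : rel T :=
  fun x y => (f y < f x) || ((f x == f y) && (tb x <= tb y))%N.

Definition sorted_by (R : realType) (T : finType) (f : T -> R) (tb : T -> nat)
  (A : {set T}) : seq T := sort (before f tb) (enum A).

Definition bp_block (R : realType) (T : finType) (r s muBP : R) (cB : nat)
  (tbBP : T -> nat) (M0 : {set T}) (bids : T -> bid R) : seq T :=
  take cB (sorted_by (fun t => bp_fee r s (bids t)) tbBP
             [set t in M0 | (r + muBP <= cap (bids t)) && (muBP <= dBP (bids t))]).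

(* Inclusion list of the includer with order j+1 (j : 'I_m), following the
   indicated allocation rule: positions j*cI+1 .. (j+1)*cI of the sorted list. *)
Definition incl_list (R : realType) (T : finType) (r s muBP muCM : R) (cB cI : nat)
  (tbBP tbCM : T -> nat) (M0 : {set T}) (bids : T -> bid R) (j : nat) : seq T :=
  let S := bp_block r s muBP cB tbBP M0 bids in
  take cI (drop (j * cI)
    (sorted_by (fun t => cm_fee r s (bids t)) tbCM
       [set t in M0 | (t \in S) && (muCM * s <= cm_fee r s (bids t))])).

Definition update_bid (R : realType) (T : finType) (bids : T -> bid R) (t : T)
  (b : bid R) : T -> bid R := fun u => if u == t then b else bids u.

(* Main.v *)
Require Import Defs.
From HB Require Import structures.
From mathcomp Require Import all_boot all_order all_algebra.
From mathcomp Require Import reals.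
From mathcomp Require Import lra.
Import Order.TTheory GRing.Theory Num.Theory.
Local Open Scope ring_scope.

Lemma before_total (R : realType) (T : finType) (f : T -> R) (tb : T -> nat) :
  total (before f tb).
Proof.
move=> x y; rewrite /before.
case: (ltgtP (f x) (f y)) => [h|h|h]; rewrite ?h ?orbT //=.
exact: leq_total.
Qed.

Lemma head_sorted (R : realType) (T : finType) (f : T -> R) (tb : T -> nat)
  (A : {set T}) t : t \in A -> (forall u, u \in A -> u != t -> f u < f t) ->
  exists s2, sorted_by f tb A = t :: s2.
Proof.
move=> tA hmax; rewrite /sorted_by.
set s := sort _ _.
have srt : sorted (before f tb) s by apply: sort_sorted; apply: before_total.
have un : uniq s by rewrite sort_uniq enum_uniq.
have ts : t \in s by rewrite mem_sort mem_enum.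
have memA : forall y, y \in s -> y \in A by move=> y; rewrite mem_sort mem_enum.
move: srt un memA; case/splitPr: ts => s1 s2.
case: s1 => [|x s1] /=; first by exists s2.
rewrite cat_path => /andP [_ /andP [hb _]].
move=> un memA; have : uniq ((x :: s1) ++ t :: s2) by []. rewrite cat_uniq => /andP [_ /andP [hn _]].
have lin : last x s1 \in x :: s1 by apply: mem_last.
have lt : last x s1 != t.
  by apply/eqP => e; move: hn; rewrite /= -e lin.
have lA : last x s1 \in A.
  by apply: memA; rewrite -cat_cons mem_cat lin.
have := hmax _ lA lt.
move: hb; rewrite /before => /orP [h1|/andP [/eqP h2 _]] h3.
  by move: (lt_asym (f t) (f (last x s1))); rewrite h1 h3.
by move: h3; rewrite h2 ltxx.
Qed.

Lemma in_take_sorted (R : realType) (T : finType) (f : T -> R) (tb : T -> nat)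
  (A : {set T}) t n : (0 < n)%N -> t \in A ->
  (forall u, u \in A -> u != t -> f u < f t) ->
  t \in take n (sorted_by f tb A).
Proof.
move=> n0 tA h; have [s2 ->] := @head_sorted _ _ f tb A t tA h.
by rewrite -(prednK n0) /= mem_head.
Qed.

Lemma bp_fee_le (R : realType) (r s : R) (b : bid R) :
  0 <= dBP b -> 0 < s -> bp_fee r s b <= dBP b * s.
Proof.
move=> h s0; rewrite /bp_fee ge_max ge_min lexx /=.
by apply: mulr_ge0 => //; apply: ltW.
Qed.

Lemma cm_fee_le (R : realType) (r s : R) (b : bid R) :
  0 <= dCM b -> 0 < s -> cm_fee r s b <= dCM b * s.
Proof.
move=> h s0; rewrite /cm_fee ge_max ge_min lexx /=.
by apply: mulr_ge0 => //; apply: ltW.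
Qed.

Lemma term_le_sum (R : realType) (T : finType) (M0 : {set T}) (F : T -> R) u :
  (forall v, v \in M0 -> 0 <= F v) -> u \in M0 -> F u <= \sum_(v in M0) F v.
Proof.
move=> h uM; rewrite (bigD1 u) //=.
have : 0 <= \sum_(v in M0 | v != u) F v.
  by apply: sumr_ge0 => v /andP [vM _]; apply: h.
lra.
Qed.

Theorem mainTheorem2 (R : realType) (T : finType) (M0 : {set T})
  (bids : T -> bid R) (s r muBP muCM : R) (m cI cB : nat)
  (tbBP tbCM : T -> nat) :
  injective tbBP -> injective tbCM ->
  0 < s -> 0 <= muBP -> 0 <= muCM ->
  (forall u, u \in M0 -> valid_bid (bids u)) ->
  (0 < m)%N -> (0 < cI)%N -> (0 < cB)%N ->
  (cB < #|M0|)%N ->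
  forall t, t \in M0 ->
  t \notin bp_block r s muBP cB tbBP M0 bids ->
  exists b : bid R, valid_bid b /\
    let bids' := update_bid bids t b in
    (exists j : 'I_m, t \in incl_list r s muBP muCM cB cI tbBP tbCM M0 bids' j) /\
    t \in bp_block r s muBP cB tbBP M0 bids'.
Proof.
move=> _ _ s0 muB muC vb m0 cI0 cB0 _ t tM _.
set Sd := \sum_(v in M0) dBP (bids v).
set Sc := \sum_(v in M0) dCM (bids v).
have dB : forall u, u \in M0 -> dBP (bids u) <= Sd.
  by move=> u uM; apply: term_le_sum uM => v /vb [_ []].
have dC : forall u, u \in M0 -> dCM (bids u) <= Sc.
  by move=> u uM; apply: term_le_sum uM => v /vb [].
have Sd0 : 0 <= Sd by apply: le_trans (dB _ tM); case: (vb _ tM) => _ [].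
have Sc0 : 0 <= Sc by apply: le_trans (dC _ tM); case: (vb _ tM).
have hr : r <= `|r| by apply: ler_norm.
have hr0 : 0 <= `|r| by apply: normr_ge0.
set Y := muBP + 1 + Sd.
set X := muCM + 1 + Sc.
set Z := `|r| + X + Y.
exists (Bid X Y Z); split.
  by rewrite /valid_bid /=; split; [|split]; rewrite /Z /X /Y; lra.
cbv zeta.
set bids' := update_bid bids t (Bid X Y Z).
have hbt : bids' t = Bid X Y Z by rewrite /bids' /update_bid eqxx.
have hbu : forall u, u != t -> bids' u = bids u.
  by move=> u ut; rewrite /bids' /update_bid (negbTE ut).
have sZY : Y * s <= Z * s - r * s.
  have : 0 <= (Z - r - Y) * s by apply: mulr_ge0; [rewrite /Z /X /Y; lra | lra].
  rewrite !mulrBl; lra.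
have bpb : bp_fee r s (Bid X Y Z) = Y * s.
  rewrite /bp_fee /= min_l // max_l //; apply: mulr_ge0; rewrite /Y; lra.
have cmb : cm_fee r s (Bid X Y Z) = X * s.
  have hXs : X * s <= Z * s - r * s - Y * s.
    have : 0 <= (Z - r - Y - X) * s by apply: mulr_ge0; [rewrite /Z /X /Y; lra | lra].
    rewrite !mulrBl; lra.
  rewrite /cm_fee /= (min_l sZY) (min_l hXs) max_l //.
  apply: mulr_ge0; rewrite /X; lra.
have inB : t \in bp_block r s muBP cB tbBP M0 bids'.
  rewrite /bp_block; apply: in_take_sorted => //.
    rewrite inE tM hbt /=; apply/andP; split; rewrite /Z /X /Y; lra.
  move=> u; rewrite inE => /andP [uM _] ut.
  rewrite hbt bpb hbu //.
  have h1 : bp_fee r s (bids u) <= dBP (bids u) * s by apply: bp_fee_le => //; case: (vb _ uM) => _ [].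
  have := dB _ uM; rewrite /Y => h.
  have : (dBP (bids u)) * s <= Sd * s by rewrite ler_pM2r.
  have : Sd * s < (muBP + 1 + Sd) * s by rewrite ltr_pM2r //; lra.
  lra.
split => //.
exists (Ordinal m0).
rewrite /incl_list /= mul0n drop0; apply: in_take_sorted => //.
  rewrite inE tM inB hbt cmb /=; rewrite ler_pM2r //; rewrite /X; lra.
move=> u; rewrite inE => /andP [uM _] ut.
rewrite hbt cmb hbu //.
have h1 : cm_fee r s (bids u) <= dCM (bids u) * s by apply: cm_fee_le => //; case: (vb _ uM).
have := dC _ uM; rewrite /X => h.
have : (dCM (bids u)) * s <= Sc * s by rewrite ler_pM2r.
have : Sc * s < (muCM + 1 + Sc) * s by rewrite ltr_pM2r //; lra.
lra.
Qed.
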